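(* Let $(\omega,\gamma)$ be a left-invariant half-flat $\mathrm{SU}(3)$-structure on $M=S^3\times S^3$, written as $\omega\in A\otimes B$, $\gamma=a\,e^{135}+b\,e^{246}+d\beta$ with $\beta\in A\otimes B$, and let $P=\Phi(K_\omega)$, $Q=\Phi(K_\beta)$. Suppose the structure is coupled, i.e. $d\omega=\mu\gamma$ for some constant $\mu\in\mathbb R$. Then $\mu\neq0$, $a=b=0$ (so $[\gamma]=0$ in $H^3(M)$), and $P=\mu Q$.
   Context: $M=S^3\times S^3$ as a Lie group; left-invariant 1-forms $e^1,\dots,e^6$ with $de^1=e^{35},\ de^3=e^{51},\ de^5=e^{13},\ de^2=e^{46},\ de^4=e^{62},\ de^6=e^{24}$; $A=\mathrm{span}(e^1,e^3,e^5)$, $B=\mathrm{span}(e^2,e^4,e^6)$. For $\eta=\sum k_{ij}e^{2i-1}\wedge e^{2j}\in A\otimes B$, $K_\eta=(k_{ij})$. An $\mathrm{SU}(3)$-structure is a pair $(\omega,\gamma)$, $\omega$ a nondegenerate 2-form, $\gamma$ a stable 3-form with stabiliser (up to $\mathbb Z/2$) $\mathrm{SL}(3,\mathbb C)$, with $\omega\wedge\gamma=0$, $3\gamma\wedge\hat\gamma=2\omega^3$, $\omega(\cdot,J\cdot)>0$; half-flat means $d\gamma=0=d(\omega^2)$. For such structures one always has $\omega\in A\otimes B$ and $\gamma=ae^{135}+be^{246}+d\beta$ with $\beta\in A\otimes B$. $\Phi\colon\mathbb R^{3\times3}\to S^2_0(\mathbb R^4)$ is the linear map with diagonal $(-k_{11}-k_{22}-k_{33},\,-k_{11}+k_{22}+k_{33},\,k_{11}-k_{22}+k_{33},\,k_{11}+k_{22}-k_{33})$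 and off-diagonal entries $S_{12}=k_{23}-k_{32}$, $S_{13}=-k_{13}+k_{31}$, $S_{14}=k_{12}-k_{21}$, $S_{23}=-k_{12}-k_{21}$, $S_{24}=-k_{13}-k_{31}$, $S_{34}=-k_{23}-k_{32}$. *)

(* Defs.v *)
(* Left-invariant forms on S^3 x S^3, i.e. on the Lie algebra
   su(2)+su(2) with basis e_1..e_6 (0-based indices 0..5 below). *)
From HB Require Import structures.
From mathcomp Require Import all_boot all_order all_fingroup all_algebra.
Set Implicit Arguments. Unset Strict Implicit. Unset Printing Implicit Defensive.
Import Order.TTheory GRing.Theory Num.Theory.
Local Open Scope ring_scope.

(* A k-form on the 6-dimensional Lie algebra, given by its values on k-tuples
   of basis vectors e_(t 0), ..., e_(t (k-1)). *)
Notation form R k := ({ffun {ffun 'I_k%N -> 'I_6} -> R}).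

Section Forms.
Variable R : rcfType.

(* the basis 1-form e^(i+1) (0-based index i) *)
Definition e1f (i : 'I_6) : form R 1 := [ffun t : {ffun 'I_1 -> 'I_6} => ((t ord0 == i) : nat)%:R].

(* wedge product, determinant convention:
   (a /\ b)(v_1..v_{p+q}) = 1/(p!q!) sum_s sgn(s) a(v_s(1),..) b(..) *)
Definition wedge (p q : nat) (a : form R p) (b : form R q) : form R (p + q) :=
  [ffun t : {ffun 'I_(p + q) -> 'I_6} => (p`! * q`!)%:R^-1 *
     \sum_(s : 'S_(p + q))
        (-1) ^+ odd_perm s *
        a [ffun i => t (s (lshift q i))] *
        b [ffun j => t (s (rshift p j))]].

Definition fscale (k : nat) (c : R) (a : form R k) : form R k :=
  [ffun t => c * a t].

Definition w3 (a b c : form R 1) : form R 3 := wedge (wedge a b) c.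

Definition iota (k : nat) (c : 'I_6) (a : form R k.+1) : form R k :=
  [ffun t : {ffun 'I_k -> 'I_6} => a [ffun i => if unlift ord0 i is Some j then t j else c]].

Definition ix (n : nat) : 'I_6 := inord n.

(* structure equations: de^1=e^35, de^3=e^51, de^5=e^13,
   de^2=e^46, de^4=e^62, de^6=e^24 (1-based) *)
Definition dE (c : 'I_6) : form R 2 :=
  match val c with
  | 0 => wedge (e1f (ix 2)) (e1f (ix 4))
  | 2 => wedge (e1f (ix 4)) (e1f (ix 0))
  | 4 => wedge (e1f (ix 0)) (e1f (ix 2))
  | 1 => wedge (e1f (ix 3)) (e1f (ix 5))
  | 3 => wedge (e1f (ix 5)) (e1f (ix 1))
  | _ => wedge (e1f (ix 1)) (e1f (ix 3))
  end.

(* exterior derivative on left-invariant (k+1)-forms: the unique degree +1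
   antiderivation extending e^c |-> de^c, namely  d = sum_c de^c /\ iota_(e_c) *)
Definition dform (k : nat) (a : form R k.+1) : form R k.+2 :=
  \sum_(c < 6) wedge (dE c) (iota c a).

Definition tup2 (i j : 'I_6) : {ffun 'I_2 -> 'I_6} :=
  [ffun k : 'I_2 => if k == ord0 then i else j].

(* the bilinear form associated to a 2-form, on column vectors (coordinates
   w.r.t. e_1..e_6) *)
Definition bil (w : form R 2) (X Y : 'cV[R]_6) : R :=
  \sum_(i < 6) \sum_(j < 6) X i 0 * Y j 0 * w (tup2 i j).

Definition nondegenerate (w : form R 2) : Prop :=
  \det (\matrix_(i < 6, j < 6) w (tup2 i j)) != 0.

Definition cof (F : 'M[R]_6) (i : nat) : form R 1 :=
  \sum_(j < 6) fscale (F (ix i) j) (e1f j).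

(* Re and Im of (f^1 + i f^2)(f^3 + i f^4)(f^5 + i f^6) *)
Definition psip (F : 'M[R]_6) : form R 3 :=
  w3 (cof F 0) (cof F 2) (cof F 4) - w3 (cof F 0) (cof F 3) (cof F 5)
  - w3 (cof F 1) (cof F 2) (cof F 5) - w3 (cof F 1) (cof F 3) (cof F 4).
Definition psim (F : 'M[R]_6) : form R 3 :=
  w3 (cof F 0) (cof F 2) (cof F 5) + w3 (cof F 0) (cof F 3) (cof F 4)
  + w3 (cof F 1) (cof F 2) (cof F 4) - w3 (cof F 1) (cof F 3) (cof F 5).

(* standard complex structure in the dual frame: J e'_1 = e'_2, J e'_2 = -e'_1,... *)
Definition J0 : 'M[R]_6 :=
  \matrix_(i < 6, j < 6)
    (if odd i && (j == i.-1 :> nat) then 1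
     else if ~~ odd i && (j == i.+1 :> nat) then -1 else 0).

(* the almost complex structure induced by the coframe F, acting on
   coordinate column vectors *)
Definition JF (F : 'M[R]_6) : 'M[R]_6 := invmx F *m J0 *m F.

(* gamma is a stable 3-form with stabiliser SL(3,C) (up to Z/2): it lies in the
   GL(6,R)-orbit of Re(dz1 dz2 dz3) *)
Definition stable_SL3C (g : form R 3) : Prop :=
  exists F : 'M[R]_6, F \in unitmx /\ g = psip F.

(* SU(3)-structure (omega, gamma): omega nondegenerate, gamma stable with
   stabiliser SL(3,C), and with hat-gamma = psim F and J = JF F induced by an
   adapted coframe F: omega /\ gamma = 0, 3 gamma /\ hat-gamma = 2 omega^3,
   omega(., J .) > 0. *)
Definition SU3_structure (w : form R 2) (g : form R 3) : Prop :=
  nondegenerate w /\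
  exists F : 'M[R]_6, [/\ F \in unitmx, g = psip F,
    (wedge w g : form R 5) = 0,
    fscale 3 (wedge g (psim F) : form R 6) = fscale 2 (wedge (wedge w w) w : form R 6)
    & forall X : 'cV[R]_6, X != 0 -> 0 < bil w X (JF F *m X)].

Definition half_flat (w : form R 2) (g : form R 3) : Prop :=
  dform g = 0 /\ dform (wedge w w : form R 4) = 0.

(* element of A (x) B with coefficient matrix K:  sum k_ij e^(2i-1) /\ e^(2j) *)
Definition AB_form (K : 'M[R]_3) : form R 2 :=
  \sum_(i < 3) \sum_(j < 3)
     fscale (K i j) (wedge (e1f (ix (2 * i))) (e1f (ix (2 * j + 1)))).

Definition e135 : form R 3 := w3 (e1f (ix 0)) (e1f (ix 2)) (e1f (ix 4)).
Definition e246 : form R 3 := w3 (e1f (ix 1)) (e1f (ix 3)) (e1f (ix 5)).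

Definition gamma_of (a b : R) (Kb : 'M[R]_3) : form R 3 :=
  fscale a e135 + fscale b e246 + dform (AB_form Kb).

(* the map Phi : R^{3x3} -> S^2_0(R^4), entries 1-based *)
Definition kk (K : 'M[R]_3) (i j : nat) : R := K (inord i.-1) (inord j.-1).
Definition phi_entry (K : 'M[R]_3) (i j : nat) : R :=
  match i, j with
  | 1, 1 => - kk K 1 1 - kk K 2 2 - kk K 3 3
  | 2, 2 => - kk K 1 1 + kk K 2 2 + kk K 3 3
  | 3, 3 => kk K 1 1 - kk K 2 2 + kk K 3 3
  | 4, 4 => kk K 1 1 + kk K 2 2 - kk K 3 3
  | 1, 2 | 2, 1 => kk K 2 3 - kk K 3 2
  | 1, 3 | 3, 1 => - kk K 1 3 + kk K 3 1
  | 1, 4 | 4, 1 => kk K 1 2 - kk K 2 1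
  | 2, 3 | 3, 2 => - kk K 1 2 - kk K 2 1
  | 2, 4 | 4, 2 => - kk K 1 3 - kk K 3 1
  | 3, 4 | 4, 3 => - kk K 2 3 - kk K 3 2
  | _, _ => 0
  end.
Definition Phi (K : 'M[R]_3) : 'M[R]_4 :=
  \matrix_(i < 4, j < 4) phi_entry K i.+1 j.+1.

End Forms.

(* Main.v *)
Require Import Defs.
From HB Require Import structures.
From mathcomp Require Import all_boot all_order all_fingroup all_algebra.
From mathcomp Require Import ring.
Import Order.TTheory GRing.Theory Num.Theory.
Local Open Scope ring_scope.
Set Implicit Arguments.
Unset Strict Implicit.
Unset Printing Implicit Defensive.

Section S.
Variable R : rcfType.
Local Notation fm k := ({ffun {ffun 'I_k%N -> 'I_6} -> R}).


Lemma sum_permS n (F : 'S_n.+1 -> R) :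
  \sum_s F s = \sum_j \sum_(s : 'S_n) F (lift_perm ord0 j s).
Proof.
rewrite (partition_big (fun s : 'S_n.+1 => s ord0) predT) //=.
apply: eq_bigr => j0 _.
rewrite (reindex (lift_perm ord0 j0)); last first.
  pose ulsf i (s : 'S_n.+1) k := odflt k (unlift (s i) (s (lift i k))).
  have ulsfK i (s : 'S_n.+1) k: lift (s i) (ulsf i s k) = s (lift i k).
    rewrite /ulsf; have:= neq_lift i k.
    by rewrite -(can_eq (permK s)) => /unlift_some[] ? ? ->.
  have inj_ulsf: injective (ulsf ord0 _).
    move=> s; apply: can_inj (ulsf (s ord0) s^-1%g) _ => k'.
    by rewrite {1}/ulsf ulsfK !permK liftK.
  exists (fun s => perm (inj_ulsf s)) => [s _ | s].
    by apply/permP=> k'; rewrite permE /ulsf lift_perm_lift lift_perm_id liftK.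
  move/(s _ =P _) => si0; apply/permP=> k.
  case: (unliftP ord0 k) => [k'|] ->; rewrite ?lift_perm_id //.
  by rewrite lift_perm_lift -si0 permE ulsfK.
by apply: eq_bigl => s; rewrite lift_perm_id eqxx.
Qed.

Lemma sum_perm1 (F : 'S_1 -> R) : \sum_s F s = F 1%g.
Proof.
rewrite (big_pred1 1%g) // => s /=; symmetry; apply/eqP/permP => i.
by rewrite !ord1.
Qed.

Definition t1 (x : 'I_6) : {ffun 'I_1 -> 'I_6} := [ffun _ => x].
Definition tup3 (x y z : 'I_6) : {ffun 'I_3 -> 'I_6} :=
  [ffun k : 'I_3 => if val k == 0%N then x else if val k == 1%N then y else z].

Lemma e1fE i x : @e1f R i (t1 x) = ((x == i) : nat)%:R.
Proof. by rewrite ffunE ffunE. Qed.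

Lemma ffun1E (G : 'I_1 -> 'I_6) : [ffun i => G i] = t1 (G ord0).
Proof. by apply/ffunP => i; rewrite !ffunE (ord1 i). Qed.
Lemma ffun2E (G : 'I_2 -> 'I_6) : [ffun i => G i] = tup2 (G ord0) (G (lift ord0 ord0)).
Proof. apply/ffunP => i; rewrite !ffunE; case: i => [[|[|//]] Hi] /=; congr G; exact: val_inj. Qed.
Lemma lsh10 : lshift 1 (ord0 : 'I_1) = ord0 :> 'I_2. Proof. exact: val_inj. Qed.
Lemma rsh10 : rshift 1 (ord0 : 'I_1) = lift ord0 ord0 :> 'I_2. Proof. exact: val_inj. Qed.

Lemma wedge11 (a b : fm 1) u v :
  wedge a b (tup2 u v) = a (t1 u) * b (t1 v) - a (t1 v) * b (t1 u).
Proof.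
rewrite ffunE sum_permS !big_ord_recl big_ord0 !sum_perm1.
rewrite !odd_lift_perm !odd_perm1 /= !ffun1E lsh10 rsh10 !(@lift_perm_id 1) !(@lift_perm_lift 1) !perm1 !ffunE /=.
have -> : (1`! * 1`!)%N = 1%N by [].
rewrite invr1; ring.
Qed.

Lemma ffun3E (G : 'I_3 -> 'I_6) : [ffun i => G i] = tup3 (G ord0) (G (lift ord0 ord0)) (G (lift ord0 (lift ord0 ord0))).
Proof. apply/ffunP => i; rewrite !ffunE; case: i => [[|[|[|//]]] Hi] /=; congr G; exact: val_inj. Qed.

Lemma tup3E (t : {ffun 'I_3 -> 'I_6}) : t = tup3 (t ord0) (t (lift ord0 ord0)) (t (lift ord0 (lift ord0 ord0))).
Proof. by rewrite -ffun3E; apply/ffunP => i; rewrite ffunE. Qed.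

Lemma lsh2_0 : lshift 1 (ord0 : 'I_2) = ord0 :> 'I_3. Proof. exact: val_inj. Qed.
Lemma lsh2_1 : lshift 1 (lift ord0 ord0 : 'I_2) = lift ord0 ord0 :> 'I_3. Proof. exact: val_inj. Qed.
Lemma rsh2_0 : rshift 2 (ord0 : 'I_1) = lift ord0 (lift ord0 ord0) :> 'I_3. Proof. exact: val_inj. Qed.

Lemma wedge21 (w : fm 2) (c : fm 1) x y z :
  wedge w c (tup3 x y z) = 2^-1 * (w (tup2 x y) * c (t1 z) - w (tup2 y x) * c (t1 z)
     - w (tup2 x z) * c (t1 y) + w (tup2 z x) * c (t1 y)
     + w (tup2 y z) * c (t1 x) - w (tup2 z y) * c (t1 x)).
Proof.
rewrite ffunE sum_permS !big_ord_recl big_ord0.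
rewrite !sum_permS !big_ord_recl !big_ord0 !sum_perm1.
rewrite !odd_lift_perm !odd_perm1 /= !ffun1E !ffun2E lsh2_0 lsh2_1 rsh2_0.
rewrite !(@lift_perm_id 2) !(@lift_perm_lift 2) !(@lift_perm_id 1) !(@lift_perm_lift 1) !perm1 !ffunE /=.
have -> : (2`! * 1`!)%N = 2%N by [].
ring.
Qed.

Lemma iotaE (c : 'I_6) (w : fm 2) x : Defs.iota c w (t1 x) = w (tup2 c x).
Proof.
rewrite ffunE; congr (w _); apply/ffunP => i; rewrite !ffunE.
case: (unliftP ord0 i) => [j|] ->; rewrite ?liftK ?unlift_none ?eqxx //.
by rewrite eq_sym (negbTE (neq_lift _ _)) ffunE.
Qed.

Notation O6 n := (@Ordinal 6 n isT).
Notation O3 n := (@Ordinal 3 n isT).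

Lemma sum6 (F : 'I_6 -> R) : \sum_c F c = F (O6 0) + F (O6 1) + F (O6 2) + F (O6 3) + F (O6 4) + F (O6 5).
Proof.
rewrite !big_ord_recr big_ord0 /= GRing.add0r.
by repeat congr (_ + _); congr F; apply: val_inj.
Qed.

Lemma sum3 (V : nmodType) (F : 'I_3 -> V) : \sum_c F c = F (O3 0) + F (O3 1) + F (O3 2).
Proof.
rewrite !big_ord_recr big_ord0 /= GRing.add0r.
by repeat congr (_ + _); congr F; apply: val_inj.
Qed.

Lemma ixE n (H : (n < 6)%N) : ix n = Ordinal H.
Proof. by apply: val_inj; rewrite /= inordK. Qed.

Lemma dformE (w : fm 2) x y z : dform w (tup3 x y z) =
  \sum_(c < 6) 2^-1 * (dE R c (tup2 x y) * w (tup2 c z) - dE R c (tup2 y x) * w (tup2 c z)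
     - dE R c (tup2 x z) * w (tup2 c y) + dE R c (tup2 z x) * w (tup2 c y)
     + dE R c (tup2 y z) * w (tup2 c x) - dE R c (tup2 z y) * w (tup2 c x)).
Proof. rewrite sum_ffunE; apply: eq_bigr => c _; by rewrite wedge21 !iotaE. Qed.

Lemma AB_formE (K : 'M[R]_3) : AB_form K =
  fscale (K (O3 0) (O3 0)) (wedge (e1f R (ix 0)) (e1f R (ix 1))) +
  fscale (K (O3 0) (O3 1)) (wedge (e1f R (ix 0)) (e1f R (ix 3))) +
  fscale (K (O3 0) (O3 2)) (wedge (e1f R (ix 0)) (e1f R (ix 5))) +
 (fscale (K (O3 1) (O3 0)) (wedge (e1f R (ix 2)) (e1f R (ix 1))) +
  fscale (K (O3 1) (O3 1)) (wedge (e1f R (ix 2)) (e1f R (ix 3))) +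
  fscale (K (O3 1) (O3 2)) (wedge (e1f R (ix 2)) (e1f R (ix 5)))) +
 (fscale (K (O3 2) (O3 0)) (wedge (e1f R (ix 4)) (e1f R (ix 1))) +
  fscale (K (O3 2) (O3 1)) (wedge (e1f R (ix 4)) (e1f R (ix 3))) +
  fscale (K (O3 2) (O3 2)) (wedge (e1f R (ix 4)) (e1f R (ix 5)))).
Proof. rewrite /AB_form !sum3. by []. Qed.

Lemma ffunDE (T : finType) (f g : {ffun T -> R}) x : (f + g) x = f x + g x.
Proof. exact: ffunE. Qed.

Lemma fscaleE k c (a : fm k) t : fscale c a t = c * a t.
Proof. by rewrite ffunE. Qed.

Lemma ixO n (H : (n < 6)%N) : ix n = Ordinal H.
Proof. by apply: val_inj; rewrite /= inordK. Qed.

Ltac ixs := rewrite ?(@ixO 0 isT) ?(@ixO 1 isT) ?(@ixO 2 isT) ?(@ixO 3 isT) ?(@ixO 4 isT) ?(@ixO 5 isT).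

Lemma ABv (K : 'M[R]_3) u v : AB_form K (tup2 u v) =
  K (O3 0) (O3 0) * ((u == O6 0)%:R * (v == O6 1)%:R - (v == O6 0)%:R * (u == O6 1)%:R) +
  K (O3 0) (O3 1) * ((u == O6 0)%:R * (v == O6 3)%:R - (v == O6 0)%:R * (u == O6 3)%:R) +
  K (O3 0) (O3 2) * ((u == O6 0)%:R * (v == O6 5)%:R - (v == O6 0)%:R * (u == O6 5)%:R) +
  (K (O3 1) (O3 0) * ((u == O6 2)%:R * (v == O6 1)%:R - (v == O6 2)%:R * (u == O6 1)%:R) +
   K (O3 1) (O3 1) * ((u == O6 2)%:R * (v == O6 3)%:R - (v == O6 2)%:R * (u == O6 3)%:R) +
   K (O3 1) (O3 2) * ((u == O6 2)%:R * (v == O6 5)%:R - (v == O6 2)%:R * (u == O6 5)%:R)) +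
  (K (O3 2) (O3 0) * ((u == O6 4)%:R * (v == O6 1)%:R - (v == O6 4)%:R * (u == O6 1)%:R) +
   K (O3 2) (O3 1) * ((u == O6 4)%:R * (v == O6 3)%:R - (v == O6 4)%:R * (u == O6 3)%:R) +
   K (O3 2) (O3 2) * ((u == O6 4)%:R * (v == O6 5)%:R - (v == O6 4)%:R * (u == O6 5)%:R)).
Proof. rewrite AB_formE !ffunDE !fscaleE !wedge11 !e1fE; ixs. by []. Qed.

Lemma dE0 u v : dE R (O6 0) (tup2 u v) = (u == O6 2)%:R * (v == O6 4)%:R - (v == O6 2)%:R * (u == O6 4)%:R.
Proof. rewrite /dE /= wedge11 !e1fE; ixs; by []. Qed.
Lemma dE2 u v : dE R (O6 2) (tup2 u v) = (u == O6 4)%:R * (v == O6 0)%:R - (v == O6 4)%:R * (u == O6 0)%:R.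
Proof. rewrite /dE /= wedge11 !e1fE; ixs; by []. Qed.
Lemma dE4 u v : dE R (O6 4) (tup2 u v) = (u == O6 0)%:R * (v == O6 2)%:R - (v == O6 0)%:R * (u == O6 2)%:R.
Proof. rewrite /dE /= wedge11 !e1fE; ixs; by []. Qed.
Lemma dE1 u v : dE R (O6 1) (tup2 u v) = (u == O6 3)%:R * (v == O6 5)%:R - (v == O6 3)%:R * (u == O6 5)%:R.
Proof. rewrite /dE /= wedge11 !e1fE; ixs; by []. Qed.
Lemma dE3 u v : dE R (O6 3) (tup2 u v) = (u == O6 5)%:R * (v == O6 1)%:R - (v == O6 5)%:R * (u == O6 1)%:R.
Proof. rewrite /dE /= wedge11 !e1fE; ixs; by []. Qed.
Lemma dE5 u v : dE R (O6 5) (tup2 u v) = (u == O6 1)%:R * (v == O6 3)%:R - (v == O6 1)%:R * (u == O6 3)%:R.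
Proof. rewrite /dE /= wedge11 !e1fE; ixs; by []. Qed.
Definition kd (p q u v : 'I_6) : R := (u == p)%:R * (v == q)%:R - (v == p)%:R * (u == q)%:R.
Definition blk (p q c : 'I_6) (w : fm 2) x y z :=
  2^-1 * (kd p q x y * w (tup2 c z) - kd p q y x * w (tup2 c z) - kd p q x z * w (tup2 c y)
     + kd p q z x * w (tup2 c y) + kd p q y z * w (tup2 c x) - kd p q z y * w (tup2 c x)).
Lemma dformE2 (w : fm 2) x y z : dform w (tup3 x y z) =
  blk (O6 2) (O6 4) (O6 0) w x y z + blk (O6 3) (O6 5) (O6 1) w x y z +
  blk (O6 4) (O6 0) (O6 2) w x y z + blk (O6 5) (O6 1) (O6 3) w x y z +
  blk (O6 0) (O6 2) (O6 4) w x y z + blk (O6 1) (O6 3) (O6 5) w x y z.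
Proof. by rewrite dformE sum6 !dE0 !dE1 !dE2 !dE3 !dE4 !dE5. Qed.

Ltac dcomp := rewrite dformE2 /blk /kd /= !ABv /=.

Definition wv (p q r x y z : 'I_6) : R :=
  2^-1 * (kd p q x y * (z == r)%:R - kd p q y x * (z == r)%:R - kd p q x z * (y == r)%:R
     + kd p q z x * (y == r)%:R + kd p q y z * (x == r)%:R - kd p q z y * (x == r)%:R).

Lemma e135E x y z : e135 R (tup3 x y z) = wv (O6 0) (O6 2) (O6 4) x y z.
Proof. rewrite /e135 /w3 wedge21 !wedge11 !e1fE; ixs; by []. Qed.
Lemma e246E x y z : e246 R (tup3 x y z) = wv (O6 1) (O6 3) (O6 5) x y z.
Proof. rewrite /e246 /w3 wedge21 !wedge11 !e1fE; ixs; by []. Qed.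

Lemma dAB024 (K : 'M[R]_3) : dform (AB_form K) (tup3 (O6 0) (O6 2) (O6 4)) = 0.
Proof. dcomp; by field. Qed.
Lemma dAB135 (K : 'M[R]_3) : dform (AB_form K) (tup3 (O6 1) (O6 3) (O6 5)) = 0.
Proof. dcomp; by field. Qed.
Lemma e135_024 : e135 R (tup3 (O6 0) (O6 2) (O6 4)) = 1.
Proof. rewrite e135E /wv /kd /=; by field. Qed.
Lemma e246_024 : e246 R (tup3 (O6 0) (O6 2) (O6 4)) = 0.
Proof. rewrite e246E /wv /kd /=; by field. Qed.
Lemma e135_135 : e135 R (tup3 (O6 1) (O6 3) (O6 5)) = 0.
Proof. rewrite e135E /wv /kd /=; by field. Qed.
Lemma e246_135 : e246 R (tup3 (O6 1) (O6 3) (O6 5)) = 1.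
Proof. rewrite e246E /wv /kd /=; by field. Qed.

Lemma evt (Kw Kb : 'M[R]_3) a b mu t :
  dform (AB_form Kw) = fscale mu (gamma_of a b Kb) ->
  dform (AB_form Kw) t = mu * (a * e135 R t + b * e246 R t + dform (AB_form Kb) t).
Proof. by move=> ->; rewrite fscaleE /gamma_of !ffunDE !fscaleE. Qed.

Lemma dAB00 (K : 'M[R]_3) : dform (AB_form K) (tup3 (O6 2) (O6 4) (O6 1)) = K (O3 0) (O3 0).
Proof. dcomp; by field. Qed.
Lemma key00 (Kw Kb : 'M[R]_3) a b mu :
  dform (AB_form Kw) = fscale mu (gamma_of a b Kb) -> Kw (O3 0) (O3 0) = mu * Kb (O3 0) (O3 0).
Proof.
move=> /(@evt _ _ _ _ _ (tup3 (O6 2) (O6 4) (O6 1))).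
rewrite !dAB00 e135E e246E /wv /kd /= => ->; by field.
Qed.

Lemma dAB01 (K : 'M[R]_3) : dform (AB_form K) (tup3 (O6 2) (O6 4) (O6 3)) = K (O3 0) (O3 1).
Proof. dcomp; by field. Qed.
Lemma key01 (Kw Kb : 'M[R]_3) a b mu :
  dform (AB_form Kw) = fscale mu (gamma_of a b Kb) -> Kw (O3 0) (O3 1) = mu * Kb (O3 0) (O3 1).
Proof.
move=> /(@evt _ _ _ _ _ (tup3 (O6 2) (O6 4) (O6 3))).
rewrite !dAB01 e135E e246E /wv /kd /= => ->; by field.
Qed.

Lemma dAB02 (K : 'M[R]_3) : dform (AB_form K) (tup3 (O6 2) (O6 4) (O6 5)) = K (O3 0) (O3 2).
Proof. dcomp; by field. Qed.
Lemma key02 (Kw Kb : 'M[R]_3) a b mu :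
  dform (AB_form Kw) = fscale mu (gamma_of a b Kb) -> Kw (O3 0) (O3 2) = mu * Kb (O3 0) (O3 2).
Proof.
move=> /(@evt _ _ _ _ _ (tup3 (O6 2) (O6 4) (O6 5))).
rewrite !dAB02 e135E e246E /wv /kd /= => ->; by field.
Qed.

Lemma dAB10 (K : 'M[R]_3) : dform (AB_form K) (tup3 (O6 4) (O6 0) (O6 1)) = K (O3 1) (O3 0).
Proof. dcomp; by field. Qed.
Lemma key10 (Kw Kb : 'M[R]_3) a b mu :
  dform (AB_form Kw) = fscale mu (gamma_of a b Kb) -> Kw (O3 1) (O3 0) = mu * Kb (O3 1) (O3 0).
Proof.
move=> /(@evt _ _ _ _ _ (tup3 (O6 4) (O6 0) (O6 1))).
rewrite !dAB10 e135E e246E /wv /kd /= => ->; by field.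
Qed.

Lemma dAB11 (K : 'M[R]_3) : dform (AB_form K) (tup3 (O6 4) (O6 0) (O6 3)) = K (O3 1) (O3 1).
Proof. dcomp; by field. Qed.
Lemma key11 (Kw Kb : 'M[R]_3) a b mu :
  dform (AB_form Kw) = fscale mu (gamma_of a b Kb) -> Kw (O3 1) (O3 1) = mu * Kb (O3 1) (O3 1).
Proof.
move=> /(@evt _ _ _ _ _ (tup3 (O6 4) (O6 0) (O6 3))).
rewrite !dAB11 e135E e246E /wv /kd /= => ->; by field.
Qed.

Lemma dAB12 (K : 'M[R]_3) : dform (AB_form K) (tup3 (O6 4) (O6 0) (O6 5)) = K (O3 1) (O3 2).
Proof. dcomp; by field. Qed.
Lemma key12 (Kw Kb : 'M[R]_3) a b mu :
  dform (AB_form Kw) = fscale mu (gamma_of a b Kb) -> Kw (O3 1) (O3 2) = mu * Kb (O3 1) (O3 2).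
Proof.
move=> /(@evt _ _ _ _ _ (tup3 (O6 4) (O6 0) (O6 5))).
rewrite !dAB12 e135E e246E /wv /kd /= => ->; by field.
Qed.

Lemma dAB20 (K : 'M[R]_3) : dform (AB_form K) (tup3 (O6 0) (O6 2) (O6 1)) = K (O3 2) (O3 0).
Proof. dcomp; by field. Qed.
Lemma key20 (Kw Kb : 'M[R]_3) a b mu :
  dform (AB_form Kw) = fscale mu (gamma_of a b Kb) -> Kw (O3 2) (O3 0) = mu * Kb (O3 2) (O3 0).
Proof.
move=> /(@evt _ _ _ _ _ (tup3 (O6 0) (O6 2) (O6 1))).
rewrite !dAB20 e135E e246E /wv /kd /= => ->; by field.
Qed.

Lemma dAB21 (K : 'M[R]_3) : dform (AB_form K) (tup3 (O6 0) (O6 2) (O6 3)) = K (O3 2) (O3 1).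
Proof. dcomp; by field. Qed.
Lemma key21 (Kw Kb : 'M[R]_3) a b mu :
  dform (AB_form Kw) = fscale mu (gamma_of a b Kb) -> Kw (O3 2) (O3 1) = mu * Kb (O3 2) (O3 1).
Proof.
move=> /(@evt _ _ _ _ _ (tup3 (O6 0) (O6 2) (O6 3))).
rewrite !dAB21 e135E e246E /wv /kd /= => ->; by field.
Qed.

Lemma dAB22 (K : 'M[R]_3) : dform (AB_form K) (tup3 (O6 0) (O6 2) (O6 5)) = K (O3 2) (O3 2).
Proof. dcomp; by field. Qed.
Lemma key22 (Kw Kb : 'M[R]_3) a b mu :
  dform (AB_form Kw) = fscale mu (gamma_of a b Kb) -> Kw (O3 2) (O3 2) = mu * Kb (O3 2) (O3 2).
Proof.
move=> /(@evt _ _ _ _ _ (tup3 (O6 0) (O6 2) (O6 5))).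
rewrite !dAB22 e135E e246E /wv /kd /= => ->; by field.
Qed.

Lemma PhiZ mu (K : 'M[R]_3) : Phi (mu *: K) = mu *: Phi K.
Proof.
apply/matrixP => i j; rewrite !mxE.
case: i => [[|[|[|[|//]]]] Hi]; case: j => [[|[|[|[|//]]]] Hj] /=; rewrite /kk !mxE; ring.
Qed.

End S.
Notation O6 n := (@Ordinal 6 n isT).

Theorem mainTheorem4 (R : rcfType) (Kw Kb : 'M[R]_3) (a b mu : R) :
  SU3_structure (AB_form Kw) (gamma_of a b Kb) ->
  half_flat (AB_form Kw) (gamma_of a b Kb) ->
  dform (AB_form Kw) = fscale mu (gamma_of a b Kb) ->
  [/\ mu != 0, a = 0, b = 0 & Phi Kw = mu *: Phi Kb].
Proof.
move=> [nd _] _ H.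
have hK : Kw = mu *: Kb.
  apply/matrixP => i j; rewrite mxE.
  case: i => [[|[|[|//]]] Hi]; case: j => [[|[|[|//]]] Hj];
  rewrite (bool_irrelevance Hi isT) (bool_irrelevance Hj isT).
  exact: key00 H. exact: key01 H. exact: key02 H.
  exact: key10 H. exact: key11 H. exact: key12 H.
  exact: key20 H. exact: key21 H. exact: key22 H.
have mu0 : mu != 0.
  apply/negP => /eqP m0; move: nd; rewrite /Defs.nondegenerate.
  set M := (X in \det X).
  have -> : M = 0.
    rewrite /M; apply/matrixP => i j; rewrite !mxE /AB_form sum_ffunE big1 // => k _.
    rewrite sum_ffunE big1 // => l _; by rewrite fscaleE hK m0 scale0r mxE mul0r.
  by rewrite det0 eqxx.
have ha : mu * a = 0.
  have := @evt _ _ _ _ _ _ (tup3 (O6 0) (O6 2) (O6 4)) H.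
  rewrite dAB024 dAB024 e135_024 e246_024 => h; rewrite [RHS]h; ring.
have hb : mu * b = 0.
  have := @evt _ _ _ _ _ _ (tup3 (O6 1) (O6 3) (O6 5)) H.
  rewrite dAB135 dAB135 e135_135 e246_135 => h; rewrite [RHS]h; ring.
split => //.
- by move/eqP: ha; rewrite mulf_eq0 (negbTE mu0) => /eqP.
- by move/eqP: hb; rewrite mulf_eq0 (negbTE mu0) => /eqP.
- by rewrite hK PhiZ.
Qed.
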